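(* Let $n\ge 3$, $0<m<\frac{n-2}{n}$, $m\ne\frac{n-2}{n+2}$, $\beta>0$, $\lambda>0$. Let $v$ be the radially symmetric solution described in the context, $w(s)=r^2v(r)^{1-m}$ with $s=\log r$, and $h(s)=w(s)-\frac{2(n-1)(n-2-nm)}{(1-m)\beta}s$. Then there exists $s_0\in\mathbb{R}$ such that $h_s(s)<0$ for all $s\ge s_0$ if $0<m<\frac{n-2}{n+2}$, and $h_s(s)>0$ for all $s\ge s_0$ if $\frac{n-2}{n+2}<m<\frac{n-2}{n}$.
   Context: $v=v(r)$, $r=|x|$, is the unique radially symmetric positive classical solution of $\frac{n-1}{m}\Delta v^m+\frac{2\beta}{1-m}v+\beta x\cdot\nabla v=0$ in $\mathbb{R}^n$ with $v(0)=\lambda$. *)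

(* Defs.v *)
From Stdlib Require Import Reals.
From Coquelicot Require Import Coquelicot.
Open Scope R_scope.

(* The profile v : R -> R of a radially symmetric function V(x) = v(|x|) on R^n,
   extended evenly to all of R.  V is a positive classical (C^2) solution of
     (n-1)/m * Laplacian(V^m) + 2 beta/(1-m) V + beta x . grad V = 0  in R^n
   with V(0) = lambda.  For radial V, Laplacian(V^m)(x) = (v^m)''(r) + (n-1)/r (v^m)'(r)
   and x . grad V(x) = r v'(r), r = |x| > 0; V is C^2 on R^n iff the even profile v
   is C^2 on R. *)
Definition radial_solution (n : nat) (m beta lambda : R) (v : R -> R) : Prop :=
  (forall r, v (- r) = v r) /\
  (forall r, 0 < v r) /\
  (forall r, ex_derive v r) /\
  (forall r, ex_derive (Derive v) r) /\
  (forall r, continuous (Derive (Derive v)) r) /\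
  v 0 = lambda /\
  (forall r, 0 < r ->
     (INR n - 1) / m *
       (Derive (Derive (fun t => Rpower (v t) m)) r
        + (INR n - 1) / r * Derive (fun t => Rpower (v t) m) r)
     + 2 * beta / (1 - m) * v r
     + beta * r * Derive v r = 0).

Definition w_of (m : R) (v : R -> R) (s : R) : R :=
  exp s ^ 2 * Rpower (v (exp s)) (1 - m).

Definition h_of (n : nat) (m beta : R) (v : R -> R) (s : R) : R :=
  w_of m v s
  - 2 * (INR n - 1) * (INR n - 2 - INR n * m) / ((1 - m) * beta) * s.

(* Main.v *)
Require Import Defs.
From Stdlib Require Import Reals Lra Psatz Classical.
From Coquelicot Require Import Coquelicot.
Open Scope R_scope.

Lemma der_cont (g : R -> R) x l : is_derive g x l -> continuity_pt g x.
Proof.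
intros H. apply continuity_pt_filterlim. apply (@ex_derive_continuous R_AbsRing R_NormedModule). exists l; exact H.
Qed.

Lemma lin_lower (g g' : R -> R) a K :
  (forall x, is_derive g x (g' x)) -> (forall x, a <= x -> K <= g' x) ->
  forall x, a <= x -> g a + K * (x - a) <= g x.
Proof.
intros Hd HK x Hx. destruct (Req_dec x a) as [->|Hne]; [lra|].
destruct (MVT_gen g a x g') as [c [Hc Heq]].
- intros; apply Hd.
- intros; eapply der_cont; apply Hd.
- rewrite Rmin_left in Hc by lra. rewrite Rmax_right in Hc by lra.
  assert (K <= g' c) by (apply HK; lra). nra.
Qed.

Lemma lin_upper (g g' : R -> R) a K :
  (forall x, is_derive g x (g' x)) -> (forall x, a <= x -> g' x <= K) ->
  forall x, a <= x -> g x <= g a + K * (x - a).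
Proof.
intros Hd HK x Hx.
assert (H := lin_lower (fun y => - g y) (fun y => - g' y) a (-K)).
assert (forall y, is_derive (fun y => - g y) y (- g' y)).
{ intros y. apply (is_derive_opp g). apply Hd. }
assert (- g a + - K * (x - a) <= - g x); [|lra].
apply H; auto. intros y Hy; specialize (HK y Hy); lra.
Qed.

Lemma cont_eps (g : R -> R) x l : is_derive g x l ->
  forall eps, 0 < eps -> exists d, 0 < d /\ forall y, Rabs (y - x) < d -> Rabs (g y - g x) < eps.
Proof.
intros H eps He. apply der_cont in H.
destruct (H eps He) as [d [Hd Hy]]. exists d; split; auto.
intros y Hyx. destruct (Req_dec y x) as [->|Hne].
- rewrite Rminus_diag, Rabs_R0; lra.
- apply (Hy y). split; [split; [exact I| auto]| exact Hyx].
Qed.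

Lemma stay_neg (g g' : R -> R) a :
  (forall x, is_derive g x (g' x)) -> g a < 0 ->
  (forall x, a <= x -> g x = 0 -> g' x < 0) ->
  forall x, a <= x -> g x < 0.
Proof.
intros Hd Ha Hz b Hb.
destruct (Rlt_or_le (g b) 0) as [|Hgb]; [auto|exfalso].
assert (Hab : a < b) by (destruct (Req_dec a b); [subst; lra | lra]).
set (E := fun x => a <= x <= b /\ forall y, a <= y <= x -> g y < 0).
assert (HE : bound E) by (exists b; intros x [Hx _]; lra).
assert (HEa : exists x, E x) by (exists a; split; [lra| intros y Hy; replace y with a by lra; auto]).
destruct (completeness E HE HEa) as [c [Hub Hlub]].
assert (Hac : a <= c) by (apply Hub; split; [lra| intros y Hy; replace y with a by lra; auto]).
assert (Hcb : c <= b) by (apply Hlub; intros x [Hx _]; lra).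
assert (Hbelow : forall y, a <= y < c -> g y < 0).
{ intros y Hy. apply NNPP; intro Hn.
  assert (c <= y); [|lra]. apply Hlub. intros x [Hx Hx2].
  destruct (Rle_or_lt x y) as [|Hlt]; auto. exfalso; apply Hn; apply Hx2; lra. }
assert (Hgc : g c = 0).
{ destruct (Rtotal_order (g c) 0) as [Hlt|[Heq|Hgt]]; auto; exfalso.
  - assert (Hcb' : c < b) by (destruct (Req_dec c b); [subst; lra|lra]).
    destruct (cont_eps g c (g' c) (Hd c) (- g c)) as [d [Hd0 Hdd]]; [lra|].
    set (x := Rmin (c + d/2) b).
    assert (Hxc : c < x) by (unfold x; apply Rmin_glb_lt; lra).
    assert (x <= c); [|lra]. apply Hub. split; [unfold x; split; [apply Rmin_glb; lra|apply Rmin_r]|].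
    intros y Hy. destruct (Rlt_or_le y c); [apply Hbelow; lra|].
    assert (Rabs (y - c) < d).
    { rewrite Rabs_right by lra. assert (x <= c + d/2) by apply Rmin_l. lra. }
    specialize (Hdd y H0). apply Rabs_lt_between in Hdd. lra.
  - assert (Hac' : a < c) by (destruct (Req_dec a c); [subst; lra|lra]).
    destruct (cont_eps g c (g' c) (Hd c) (g c)) as [d [Hd0 Hdd]]; [lra|].
    set (y := Rmax (c - d/2) a).
    assert (Hyc : y < c) by (unfold y; apply Rmax_lub_lt; lra).
    assert (Hy1 : a <= y) by apply Rmax_r.
    assert (Hy2 : c - d/2 <= y) by apply Rmax_l.
    assert (Rabs (y - c) < d) by (rewrite Rabs_left by lra; lra).
    specialize (Hdd y H). apply Rabs_lt_between in Hdd.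
    specialize (Hbelow y (conj Hy1 Hyc)). lra. }
assert (Hac' : a < c) by (destruct (Req_dec a c); [subst; lra|lra]).
assert (Hneg := Hz c Hac Hgc).
pose proof (proj1 (is_derive_Reals g c (g' c)) (Hd c)) as Hl.
destruct (Hl (- g' c)) as [d Hdd]; [lra|].
set (h := - Rmin (d/2) ((c - a)/2)).
assert (Hh1 : 0 < Rmin (d/2) ((c - a)/2)) by (apply Rmin_glb_lt; destruct d; simpl; lra).
assert (Hh2 : Rmin (d/2) ((c - a)/2) <= d/2) by apply Rmin_l.
assert (Hh3 : Rmin (d/2) ((c - a)/2) <= (c-a)/2) by apply Rmin_r.
assert (Hd' : Rabs h < d) by (unfold h; rewrite Rabs_Ropp, Rabs_right by lra; destruct d; simpl in *; lra).
specialize (Hdd h ltac:(unfold h; lra) Hd').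
rewrite Hgc, Rminus_0_r in Hdd.
assert (Hgch : g (c + h) < 0) by (apply Hbelow; unfold h; lra).
apply Rabs_lt_between in Hdd.
assert (0 < g (c + h) / h).
{ unfold Rdiv. assert (/ h < 0) by (apply Rinv_lt_0_compat; unfold h; lra). nra. }
lra.
Qed.
Lemma is_derive_eq (f : R -> R) (x l l' : R) : is_derive f x l -> l = l' -> is_derive f x l'.
Proof. intros H <-; exact H. Qed.

Lemma m1 a : -1 * a = - a. Proof. ring. Qed.
Lemma m1' a : 1 * a = a. Proof. ring. Qed.

Lemma d_aff (P : R -> R) x l a c : is_derive P x l -> is_derive (fun s => a + c * P s) x (c * l).
Proof.
intros H. auto_derive. exists l; exact H.
change (fun x0 : R => P x0) with P. rewrite (is_derive_unique P x l H). ring.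
Qed.

Lemma P_pos (W P : R -> R) c1 k b F0 s1 :
  (forall s, 0 < W s) ->
  (forall s, is_derive P s (F0 + b * P s - k * P s ^ 2 - c1 * W s * P s)) ->
  0 < F0 -> 0 < P s1 -> forall s, s1 <= s -> 0 < P s.
Proof.
intros HWp HP HF0 Hs1 s Hs.
assert (H := stay_neg (fun s => - P s) (fun s => - (F0 + b * P s - k * P s ^ 2 - c1 * W s * P s)) s1).
assert (- P s < 0); [|lra]. apply H; auto.
- intros x. apply (is_derive_opp P). apply HP.
- lra.
- intros x _ Hx. assert (P x = 0) by lra. rewrite H0. simpl. lra.
Qed.

Lemma W_mono (W P : R -> R) s1 :
  (forall s, 0 < W s) -> (forall s, is_derive W s (W s * P s)) ->
  (forall s, s1 <= s -> 0 < P s) -> forall a s, s1 <= a -> a <= s -> W a <= W s.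
Proof.
intros HWp HW HPp a s Ha Has.
assert (H := lin_lower W (fun s => W s * P s) a 0 HW).
assert (W a + 0 * (s - a) <= W s); [|lra]. apply H; auto.
intros x Hx. assert (0 < W x * P x); [|lra]. apply Rmult_lt_0_compat; auto. apply HPp; lra.
Qed.

Lemma W_unb (W P : R -> R) c1 k b F0 s1 :
  0 < c1 -> 0 < k -> 0 < F0 ->
  (forall s, 0 < W s) -> (forall s, is_derive W s (W s * P s)) ->
  (forall s, is_derive P s (F0 + b * P s - k * P s ^ 2 - c1 * W s * P s)) ->
  0 < P s1 -> forall M, exists s, s1 <= s /\ M < W s.
Proof.
intros Hc1 Hk HF0 HWp HW HP Hs1 M.
assert (HPp := P_pos W P c1 k b F0 s1 HWp HP HF0 Hs1).
apply NNPP; intro Hn.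
assert (HM : forall s, s1 <= s -> W s <= M).
{ intros s Hs. apply Rnot_lt_le. intro Hl. apply Hn. exists s; auto. }
assert (HM0 : 0 < M) by (specialize (HM s1 (Rle_refl _)); specialize (HWp s1); lra).
set (C := Rabs b + k + c1 * M).
assert (HC : 0 < C) by (unfold C; assert (0 <= Rabs b) by apply Rabs_pos; nra).
set (d := Rmin (P s1 / 2) (Rmin 1 (F0 / (2 * C)))).
assert (Hd1 : d <= P s1 / 2) by apply Rmin_l.
assert (Hd2 : d <= 1) by (eapply Rle_trans; [apply Rmin_r| apply Rmin_l]).
assert (Hd3 : d <= F0 / (2 * C)) by (eapply Rle_trans; [apply Rmin_r| apply Rmin_r]).
assert (Hd0 : 0 < d).
{ unfold d. apply Rmin_glb_lt; [lra|]. apply Rmin_glb_lt; [lra|]. apply Rdiv_lt_0_compat; lra. }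
assert (HdC : d * C <= F0 / 2).
{ apply (Rmult_le_compat_r C) in Hd3; [|lra]. replace (F0 / (2 * C) * C) with (F0/2) in Hd3 by (field; lra). lra. }
assert (HPd : forall s, s1 <= s -> d - P s < 0).
{ apply (stay_neg (fun s => d - P s) (fun s => - (F0 + b * P s - k * P s ^ 2 - c1 * W s * P s))).
  - intros x. eapply is_derive_eq.
    { eapply is_derive_ext; [|exact (d_aff P x _ d (-1) (HP x))]. intros t; simpl; ring. }
    apply m1.
  - lra.
  - intros x Hx Hz. assert (HPx : P x = d) by lra. rewrite HPx.
    assert (HWx := HM x Hx). assert (HWx0 := HWp x).
    assert (Hb : - Rabs b <= b) by (rewrite <- Rabs_Ropp; pose proof (Rle_abs (-b)); lra).
    assert (b * d >= - Rabs b * d) by nra.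
    assert (c1 * W x * d <= c1 * M * d) by (apply Rmult_le_compat_r; [lra|]; apply Rmult_le_compat_l; lra).
    assert (Hdd : d * d <= d * 1) by (apply Rmult_le_compat_l; lra).
    assert (k * (d * d) <= k * (d * 1)) by (apply Rmult_le_compat_l; lra).
    unfold C in HdC. simpl. nra. }
set (K := W s1 * d).
assert (HK : 0 < K) by (unfold K; specialize (HWp s1); nra).
assert (Hlin := lin_lower W (fun s => W s * P s) s1 K HW).
set (s := s1 + M / K + 1).
assert (W s1 + K * (s - s1) <= W s).
{ apply Hlin; [|unfold s; assert (0 < M/K) by (apply Rdiv_lt_0_compat; lra); lra].
  intros x Hx. unfold K.
  assert (W s1 <= W x) by (apply (W_mono W P s1); auto; lra).
  assert (d <= P x) by (specialize (HPd x Hx); lra).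
  specialize (HWp s1). nra. }
assert (K * (s - s1) = M + K) by (unfold s; field; lra).
specialize (HM s ltac:(unfold s; assert (0 < M/K) by (apply Rdiv_lt_0_compat; lra); lra)).
specialize (HWp s1). lra.
Qed.

Lemma P_small (W P : R -> R) c1 k b F0 s1 :
  0 < c1 -> 0 < k -> 0 < F0 ->
  (forall s, 0 < W s) -> (forall s, is_derive W s (W s * P s)) ->
  (forall s, is_derive P s (F0 + b * P s - k * P s ^ 2 - c1 * W s * P s)) ->
  0 < P s1 -> forall eps, 0 < eps -> exists s3, s1 <= s3 /\ forall s, s3 <= s -> P s < eps.
Proof.
intros Hc1 Hk HF0 HWp HW HP Hs1 eps Heps.
assert (HPp := P_pos W P c1 k b F0 s1 HWp HP HF0 Hs1).
set (B := F0 + b ^ 2 / (4 * k) + 1).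
assert (HB0 : 0 < B) by (unfold B; assert (0 <= b ^ 2 / (4 * k)) by (apply Rdiv_le_0_compat; nra); lra).
assert (HFB : forall p, F0 + b * p - k * p ^ 2 <= B).
{ intros p. unfold B.
  assert (b * p - k * p ^ 2 <= b ^ 2 / (4 * k)); [|lra].
  apply (Rmult_le_reg_l (4 * k)); [lra|].
  replace (4 * k * (b ^ 2 / (4 * k))) with (b ^ 2) by (field; lra).
  assert (0 <= (2*k*p - b)^2) by apply pow2_ge_0.
  assert (4 * k * (b * p - k * p ^ 2) = b^2 - (2*k*p - b)^2) by ring. lra. }
set (M := 2 * B / (c1 * eps)).
destruct (W_unb W P c1 k b F0 s1 Hc1 Hk HF0 HWp HW HP Hs1 M) as [s2 [Hs2 HWs2]].
assert (HWM : forall s, s2 <= s -> M <= W s).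
{ intros s Hs. assert (W s2 <= W s) by (apply (W_mono W P s1); auto). lra. }
assert (HcM : c1 * M * eps = 2 * B) by (unfold M; field; lra).
assert (Hneg : forall s, s2 <= s -> eps <= P s -> F0 + b * P s - k * P s ^ 2 - c1 * W s * P s <= - B).
{ intros s Hs HPs. specialize (HFB (P s)). specialize (HWM s Hs).
  assert (c1 * M * eps <= c1 * W s * P s).
  { assert (H1 : c1 * M <= c1 * W s) by (apply Rmult_le_compat_l; lra).
    assert (H2 : 0 <= c1 * M) by (unfold M; apply Rmult_le_pos; [lra|]; apply Rdiv_le_0_compat; nra).
    apply Rmult_le_compat; lra. }
  lra. }
assert (Hex : exists s3, s2 <= s3 /\ P s3 < eps).
{ apply NNPP; intro Hn.
  assert (Hall : forall s, s2 <= s -> eps <= P s).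
  { intros s Hs. apply Rnot_lt_le. intro Hl. apply Hn. exists s; auto. }
  set (s := s2 + P s2 / B + 1).
  assert (Hsv : s2 <= s) by (unfold s; assert (0 < P s2 / B) by (apply Rdiv_lt_0_compat; auto; apply HPp; lra); lra).
  assert (P s <= P s2 + - B * (s - s2)).
  { apply (lin_upper P (fun s => F0 + b * P s - k * P s ^ 2 - c1 * W s * P s)); auto. }
  assert (B * (s - s2) = P s2 + B) by (unfold s; field; lra).
  specialize (HPp s ltac:(lra)). lra. }
destruct Hex as [s3 [Hs3 HPs3]].
exists s3. split; [lra|].
intros s Hs.
assert (P s - eps < 0); [|lra].
apply (stay_neg (fun s => P s - eps) (fun s => F0 + b * P s - k * P s ^ 2 - c1 * W s * P s) s3); auto.
- intros x. eapply is_derive_eq.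
  { eapply is_derive_ext; [|exact (d_aff P x _ (- eps) 1 (HP x))]. intros t; simpl; ring. }
  apply m1'.
- lra.
- intros x Hx Hz. assert (eps <= P x) by lra. specialize (Hneg x ltac:(lra) H). lra.
Qed.

Lemma Y_neg (W P Y : R -> R) c1 cc k1 A s3 :
  0 < c1 -> 0 < A -> 0 < cc -> (forall s, 0 < W s) -> (forall s, Y s = W s * P s - A) ->
  (forall s, is_derive Y s (- c1 * W s * Y s - W s * P s * (cc + k1 * P s))) ->
  (forall s, s3 <= s -> 0 < P s) -> (forall s, s3 <= s -> cc / 2 <= cc + k1 * P s) ->
  exists s4, forall s, s4 <= s -> Y s < 0.
Proof.
intros Hc1 HA Hcc HWp HY HdY HPp Hk.
assert (Hex : exists s4, s3 <= s4 /\ Y s4 < 0).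
{ apply NNPP; intro Hn.
  assert (Hall : forall s, s3 <= s -> 0 <= Y s).
  { intros s Hs. apply Rnot_lt_le. intro Hl. apply Hn. exists s; auto. }
  assert (Hd : forall s, s3 <= s -> - c1 * W s * Y s - W s * P s * (cc + k1 * P s) <= - (A * cc / 2)).
  { intros s Hs. specialize (Hall s Hs). specialize (Hk s Hs). specialize (HPp s Hs).
    specialize (HWp s). rewrite HY in Hall.
    assert (0 <= c1 * W s * Y s) by (apply Rmult_le_pos; [nra|]; rewrite HY; lra).
    assert (W s * P s * (cc / 2) <= W s * P s * (cc + k1 * P s)) by (apply Rmult_le_compat_l; nra).
    nra. }
  set (s := s3 + Y s3 / (A * cc / 2) + 1).
  assert (Hsv : s3 <= s).
  { unfold s. assert (0 <= Y s3 / (A * cc / 2)). apply Rdiv_le_0_compat; [apply Hall; lra|nra]. lra. }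
  assert (Y s <= Y s3 + - (A * cc / 2) * (s - s3)) by (apply (lin_upper Y (fun s => - c1 * W s * Y s - W s * P s * (cc + k1 * P s)) s3); auto).
  assert ((A * cc / 2) * (s - s3) = Y s3 + A * cc / 2) by (unfold s; field; nra).
  specialize (Hall s Hsv). nra. }
destruct Hex as [s4 [Hs4 HY4]]. exists s4.
apply (stay_neg Y (fun s => - c1 * W s * Y s - W s * P s * (cc + k1 * P s)) s4); auto.
intros x Hx Hz. rewrite Hz. specialize (Hk x ltac:(lra)). specialize (HPp x ltac:(lra)).
specialize (HWp x).
assert (0 < W x * P x * (cc + k1 * P x)); [|lra].
apply Rmult_lt_0_compat; [nra|lra].
Qed.

Lemma Y_pos (W P Y : R -> R) c1 cc k1 A s3 :
  0 < c1 -> 0 < A -> cc < 0 -> (forall s, 0 < W s) -> (forall s, Y s = W s * P s - A) ->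
  (forall s, is_derive Y s (- c1 * W s * Y s - W s * P s * (cc + k1 * P s))) ->
  (forall s, s3 <= s -> 0 < P s) -> (forall s, s3 <= s -> cc + k1 * P s <= cc / 2) ->
  exists s4, forall s, s4 <= s -> 0 < Y s.
Proof.
intros Hc1 HA Hcc HWp HY HdY HPp Hk.
assert (Hex : exists s4, s3 <= s4 /\ 0 < Y s4).
{ apply NNPP; intro Hn.
  assert (Hall : forall s, s3 <= s -> Y s <= 0).
  { intros s Hs. apply Rnot_lt_le. intro Hl. apply Hn. exists s; auto. }
  assert (Hd : forall s, s3 <= s -> (W s * P s) * (- cc / 2) <= - c1 * W s * Y s - W s * P s * (cc + k1 * P s)).
  { intros s Hs. specialize (Hall s Hs). specialize (Hk s Hs). specialize (HPp s Hs).
    specialize (HWp s).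
    assert (0 <= - c1 * W s * Y s) by (assert (0 <= c1 * W s) by nra; nra).
    assert (W s * P s * (cc + k1 * P s) <= W s * P s * (cc / 2)) by (apply Rmult_le_compat_l; nra).
    nra. }
  assert (Hmono : forall s, s3 <= s -> Y s3 <= Y s).
  { intros s Hs. assert (Y s3 + 0 * (s - s3) <= Y s); [|lra].
    apply (lin_lower Y (fun s => - c1 * W s * Y s - W s * P s * (cc + k1 * P s)) s3); auto. intros x Hx. specialize (Hd x Hx).
    specialize (HPp x Hx). specialize (HWp x). assert (0 <= W x * P x * (- cc / 2)); [|lra].
    apply Rmult_le_pos; [nra|lra]. }
  set (Z0 := W s3 * P s3).
  assert (HZ0 : 0 < Z0) by (unfold Z0; specialize (HPp s3 (Rle_refl _)); specialize (HWp s3); nra).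
  set (kap := Z0 * (- cc / 2)).
  assert (Hkap : 0 < kap) by (unfold kap; nra).
  set (s := s3 - Y s3 / kap + 1).
  assert (Hsv : s3 <= s).
  { unfold s. assert (Y s3 / kap <= 0).
    { unfold Rdiv. assert (0 < / kap) by (apply Rinv_0_lt_compat; lra).
      specialize (Hall s3 (Rle_refl _)). nra. }
    lra. }
  assert (Y s3 + kap * (s - s3) <= Y s).
  { apply (lin_lower Y (fun s => - c1 * W s * Y s - W s * P s * (cc + k1 * P s)) s3); auto.
    intros x Hx. specialize (Hd x Hx). specialize (Hmono x Hx).
    assert (HZ : Z0 <= W x * P x) by (unfold Z0; rewrite <- (Rplus_0_r (W s3 * P s3)), <- (Rplus_0_r (W x * P x));
      pose proof (HY s3); pose proof (HY x); lra).
    unfold kap. assert (Z0 * (- cc / 2) <= W x * P x * (- cc / 2)) by (apply Rmult_le_compat_r; lra).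
    lra. }
  assert (kap * (s - s3) = - Y s3 + kap) by (unfold s; field; lra).
  specialize (Hall s Hsv). lra. }
destruct Hex as [s4 [Hs4 HY4]]. exists s4.
intros s Hs.
assert (- Y s < 0); [|lra].
apply (stay_neg (fun s => - Y s) (fun s => - (- c1 * W s * Y s - W s * P s * (cc + k1 * P s))) s4); auto.
- intros x. eapply is_derive_eq.
  { eapply is_derive_ext; [|exact (d_aff Y x _ 0 (-1) (HdY x))]. intros t; simpl; ring. }
  apply m1.
- lra.
- intros x Hx Hz. assert (Y x = 0) by lra. rewrite H. specialize (Hk x ltac:(lra)). specialize (HPp x ltac:(lra)).
  specialize (HWp x).
  assert (0 < W x * P x * (- (cc + k1 * P x))); [apply Rmult_lt_0_compat; [nra|lra]|].
  lra.
Qed.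
Definition uf (v : R -> R) s := exp s * Derive v (exp s) / v (exp s).
Definition Pf m v s := 2 + (1-m) * uf v s.

Ltac eta_v v := try change (fun x : R => v x) with v in *;
  try change (fun x : R => Derive v x) with (Derive v) in *.

Lemma Dphi m (v : R -> R) : (forall r, 0 < v r) -> (forall r, ex_derive v r) ->
  forall t, Derive (fun t => Rpower (v t) m) t = Rpower (v t) m * m * Derive v t / v t.
Proof.
intros Hp Hd t. apply is_derive_unique. unfold Rpower. auto_derive; eta_v v.
- split; auto. 
- field. apply Rgt_not_eq, Hp.
Qed.

Lemma DDphi m (v : R -> R) : (forall r, 0 < v r) -> (forall r, ex_derive v r) ->
  (forall r, ex_derive (Derive v) r) ->
  forall t, Derive (Derive (fun t => Rpower (v t) m)) t =
    Rpower (v t) m * m * ((m - 1) * (Derive v t / v t)^2 + Derive (Derive v) t / v t).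
Proof.
intros Hp Hd Hd2 t.
rewrite (Derive_ext _ (fun t => Rpower (v t) m * m * Derive v t / v t)) by (apply Dphi; auto).
apply is_derive_unique. unfold Rpower. auto_derive; eta_v v.
- repeat split; auto; apply Rgt_not_eq, Hp.
- field. apply Rgt_not_eq, Hp.
Qed.

Lemma dW (m : R) (v : R -> R) : (forall r, 0 < v r) -> (forall r, ex_derive v r) ->
  forall s, is_derive (w_of m v) s (w_of m v s * Pf m v s).
Proof.
intros Hp Hd s. unfold w_of, Pf, uf, Rpower.
auto_derive; eta_v v.
- repeat split; auto.
- field. apply Rgt_not_eq, Hp.
Qed.

Lemma du (v : R -> R) : (forall r, 0 < v r) -> (forall r, ex_derive v r) ->
  (forall r, ex_derive (Derive v) r) ->
  forall s, is_derive (uf v) s (uf v s + exp s ^ 2 * Derive (Derive v) (exp s) / v (exp s) - uf v s ^ 2).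
Proof.
intros Hp Hd Hd2 s. unfold uf.
auto_derive; eta_v v.
- repeat split; auto; apply Rgt_not_eq, Hp.
- field. apply Rgt_not_eq, Hp.
Qed.

Definition Ff (n : nat) m p := - (m/(1-m)) * (p-2)^2 - (INR n - 2)*(p-2).

Lemma dP n m beta lambda v : 0 < m -> m < 1 -> (3 <= n)%nat -> radial_solution n m beta lambda v ->
  forall s, is_derive (Pf m v) s (Ff n m (Pf m v s) - beta/(INR n - 1) * w_of m v s * Pf m v s).
Proof.
intros Hm0 Hm1 Hn [Hev [Hp [Hd [Hd2 [Hc [H0 Hode]]]]]] s.
assert (HN : 3 <= INR n) by (replace 3 with (INR 3) by (simpl; lra); apply le_INR; auto).
assert (Hr : 0 < exp s) by apply exp_pos.
specialize (Hode (exp s) Hr).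
rewrite (DDphi m v Hp Hd Hd2), (Dphi m v Hp Hd) in Hode.
assert (HX : 0 < Rpower (v (exp s)) m) by (unfold Rpower; apply exp_pos).
assert (HW : Rpower (v (exp s)) (1 - m) = v (exp s) / Rpower (v (exp s)) m).
{ assert (Rpower (v (exp s)) m * Rpower (v (exp s)) (1 - m) = v (exp s)).
  { rewrite <- Rpower_plus. replace (m + (1 - m)) with 1 by ring. apply Rpower_1, Hp. }
  apply (Rmult_eq_reg_l (Rpower (v (exp s)) m)); [|lra]. rewrite H. field. lra. }
assert (HV := Hp (exp s)).
unfold Pf, uf, Ff, w_of. auto_derive; eta_v v.
{ repeat split; auto; lra. }
rewrite HW.
set (D2 := Derive (Derive v) (exp s)) in *.
set (D := Derive v (exp s)) in *.
set (V := v (exp s)) in *.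
set (X := Rpower V m) in *.
set (r := exp s) in *.
set (N := INR n) in *.
set (L := (N - 1) / m * (X * m * ((m - 1) * (D / V) ^ 2 + D2 / V) + (N - 1) / r * (X * m * D / V)) +
       2 * beta / (1 - m) * V + beta * r * D) in *.
replace D2 with (D2 - L / ((N - 1) * X / V)) by (rewrite Hode; field; repeat split; lra).
unfold L. field. repeat split; lra.
Qed.

Lemma d_prod (W P : R -> R) x dW dP A : is_derive W x dW -> is_derive P x dP ->
  is_derive (fun s => W s * P s - A) x (dW * P x + W x * dP).
Proof.
intros H1 H2. auto_derive. split; [exists dW; exact H1| split; [exists dP; exact H2| exact I]].
change (fun x0 : R => W x0) with W. change (fun x0 : R => P x0) with P.
rewrite (is_derive_unique W x dW H1), (is_derive_unique P x dP H2). ring.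
Qed.

Lemma d_lin2 (W : R -> R) x dW C : is_derive W x dW ->
  is_derive (fun s => W s - C * s) x (dW - C).
Proof.
intros H1. auto_derive. exists dW; exact H1.
change (fun x0 : R => W x0) with W. rewrite (is_derive_unique W x dW H1). ring.
Qed.

Lemma small_bound k1 cc p : 0 < p -> p < Rmin 1 (Rabs cc / (2 * (Rabs k1 + 1))) ->
  Rabs (k1 * p) <= Rabs cc / 2.
Proof.
intros Hp Hpe.
assert (Hp2 : p <= Rabs cc / (2 * (Rabs k1 + 1))) by (pose proof (Rmin_r 1 (Rabs cc / (2 * (Rabs k1 + 1)))); lra).
assert (H0 : 0 <= Rabs k1) by apply Rabs_pos.
assert (H0' : 0 <= Rabs cc) by apply Rabs_pos.
rewrite Rabs_mult, (Rabs_right p) by lra.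
assert (Rabs k1 * p <= Rabs k1 * (Rabs cc / (2 * (Rabs k1 + 1)))) by (apply Rmult_le_compat_l; lra).
assert (Rabs k1 * (Rabs cc / (2 * (Rabs k1 + 1))) <= Rabs cc / 2); [|lra].
apply (Rmult_le_reg_r (2 * (Rabs k1 + 1))); [lra|].
replace (Rabs k1 * (Rabs cc / (2 * (Rabs k1 + 1))) * (2 * (Rabs k1 + 1))) with (Rabs k1 * Rabs cc) by (field; lra).
replace (Rabs cc / 2 * (2 * (Rabs k1 + 1))) with (Rabs k1 * Rabs cc + Rabs cc) by field.
lra.
Qed.

Theorem corollary2p4 (n : nat) (m beta lambda : R) (v : R -> R) :
  (3 <= n)%nat ->
  0 < m -> m < (INR n - 2) / INR n ->
  m <> (INR n - 2) / (INR n + 2) ->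
  0 < beta -> 0 < lambda ->
  radial_solution n m beta lambda v ->
  exists s0 : R,
    (m < (INR n - 2) / (INR n + 2) ->
       forall s, s0 <= s -> Derive (h_of n m beta v) s < 0) /\
    ((INR n - 2) / (INR n + 2) < m ->
       forall s, s0 <= s -> Derive (h_of n m beta v) s > 0).
Proof.
intros Hn Hm0 Hmt Hmne Hb Hl Hrad.
assert (Hrad' := Hrad).
destruct Hrad' as [Hev [Hp [Hd [Hd2 [Hc [H0 Hode]]]]]].
assert (HN : 3 <= INR n) by (replace 3 with (INR 3) by (simpl; lra); apply le_INR; auto).
assert (HK0 : m * INR n < INR n - 2).
{ replace (INR n - 2) with ((INR n - 2) / INR n * INR n) by (field; lra).
  apply Rmult_lt_compat_r; lra. }
assert (Hm1 : m < 1) by nra.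
set (k := m / (1 - m)).
set (c1 := beta / (INR n - 1)).
set (A := 2 * (INR n - 1) * (INR n - 2 - INR n * m) / ((1 - m) * beta)).
set (F0 := 2 * (INR n - 2) - 4 * k).
set (b := 4 * k - (INR n - 2)).
set (cc := INR n - 2 - 4 * k).
set (k1 := k - 1).
assert (Hk : 0 < k) by (unfold k; apply Rdiv_lt_0_compat; lra).
assert (Hc1 : 0 < c1) by (unfold c1; apply Rdiv_lt_0_compat; lra).
assert (HA : 0 < A).
{ unfold A. apply Rdiv_lt_0_compat; [|apply Rmult_lt_0_compat; lra].
  apply Rmult_lt_0_compat; lra. }
assert (HF0e : F0 = 2 * (INR n - 2 - INR n * m) / (1 - m)) by (unfold F0, k; field; lra).
assert (HF0 : 0 < F0) by (rewrite HF0e; apply Rdiv_lt_0_compat; lra).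
assert (Hc1A : c1 * A = F0) by (rewrite HF0e; unfold c1, A; field; repeat split; lra).
set (W := w_of m v).
set (P := Pf m v).
assert (HWp : forall s, 0 < W s).
{ intros s. unfold W, w_of, Rpower. apply Rmult_lt_0_compat; [apply pow_lt, exp_pos| apply exp_pos]. }
assert (HW : forall s, is_derive W s (W s * P s)) by (intros s; apply dW; auto).
assert (HP : forall s, is_derive P s (F0 + b * P s - k * P s ^ 2 - c1 * W s * P s)).
{ intros s. eapply is_derive_eq. apply (dP n m beta lambda v); auto.
  unfold Ff, F0, b, c1, k. fold P W. ring. }
set (Y := fun s => W s * P s - A).
assert (HY : forall s, is_derive Y s (- c1 * W s * Y s - W s * P s * (cc + k1 * P s))).
{ intros s. eapply is_derive_eq. apply (d_prod W P s _ _ A (HW s) (HP s)).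
  unfold Y. rewrite <- Hc1A. unfold cc, k1, b. ring. }
assert (Dh : forall s, Derive (h_of n m beta v) s = Y s).
{ intros s. apply is_derive_unique.
  eapply is_derive_ext; [|apply (d_lin2 W s _ (2 * (INR n - 1) * (INR n - 2 - INR n * m) / ((1 - m) * beta)) (HW s))].
  intros t. reflexivity. }
assert (Hs1 : exists s1, 0 < P s1).
{ set (g := fun r => 2 * v r + (1 - m) * r * Derive v r).
  assert (Hg : ex_derive g 0) by (unfold g; auto_derive; repeat split; auto).
  destruct (cont_eps g 0 _ (Derive_correct g 0 Hg) lambda Hl) as [d [Hd0 Hdd]].
  assert (Hg0 : g 0 = 2 * lambda) by (unfold g; rewrite H0; ring).
  set (r := d / 2).
  assert (Hr : 0 < r) by (unfold r; lra).
  specialize (Hdd r ltac:(rewrite Rminus_0_r, Rabs_right; unfold r; lra)).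
  rewrite Hg0 in Hdd. apply Rabs_lt_between in Hdd.
  exists (ln r).
  assert (HPe : P (ln r) = g r / v r).
  { unfold P, Pf, uf, g. rewrite exp_ln by auto. field. apply Rgt_not_eq, Hp. }
  rewrite HPe. apply Rdiv_lt_0_compat; [lra| apply Hp]. }
destruct Hs1 as [s1 Hs1].
assert (HPp := P_pos W P c1 k b F0 s1 HWp HP HF0 Hs1).
assert (HYe : forall s, Y s = W s * P s - A) by (intros; reflexivity).
set (eps := Rmin 1 (Rabs cc / (2 * (Rabs k1 + 1)))).
assert (Hcc_e : cc = (INR n - 2 - (INR n + 2) * m) / (1 - m)) by (unfold cc, k; field; lra).
destruct (Rtotal_order m ((INR n - 2) / (INR n + 2))) as [Hlt|[Heq|Hgt]]; [| contradiction |].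
- assert (Hm2 : (INR n + 2) * m < INR n - 2).
  { replace (INR n - 2) with ((INR n + 2) * ((INR n - 2) / (INR n + 2))) by (field; lra).
    apply Rmult_lt_compat_l; lra. }
  assert (Hcc : 0 < cc) by (rewrite Hcc_e; apply Rdiv_lt_0_compat; lra).
  assert (Heps : 0 < eps).
  { unfold eps. apply Rmin_glb_lt; [lra|]. apply Rdiv_lt_0_compat; [rewrite Rabs_right; lra|].
    pose proof (Rabs_pos k1); lra. }
  destruct (P_small W P c1 k b F0 s1 Hc1 Hk HF0 HWp HW HP Hs1 eps Heps) as [s3 [Hs3 HPs3]].
  destruct (Y_neg W P Y c1 cc k1 A s3 Hc1 HA Hcc HWp HYe HY) as [s4 Hs4].
  + intros s Hs. apply HPp; lra.
  + intros s Hs. assert (HB := small_bound k1 cc (P s) (HPp s ltac:(lra)) (HPs3 s Hs)).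
    rewrite (Rabs_right cc) in HB by lra. pose proof (Rle_abs (- (k1 * P s))). rewrite Rabs_Ropp in H. lra.
  + exists s4. split; [|intros; lra]. intros _ s Hs. rewrite Dh. apply Hs4; auto.
- assert (Hm2 : INR n - 2 < (INR n + 2) * m).
  { replace (INR n - 2) with ((INR n + 2) * ((INR n - 2) / (INR n + 2))) by (field; lra).
    apply Rmult_lt_compat_l; lra. }
  assert (Hcc : cc < 0).
  { rewrite Hcc_e. unfold Rdiv. assert (0 < / (1 - m)) by (apply Rinv_0_lt_compat; lra). nra. }
  assert (Heps : 0 < eps).
  { unfold eps. apply Rmin_glb_lt; [lra|]. apply Rdiv_lt_0_compat; [rewrite Rabs_left; lra|].
    pose proof (Rabs_pos k1); lra. }
  destruct (P_small W P c1 k b F0 s1 Hc1 Hk HF0 HWp HW HP Hs1 eps Heps) as [s3 [Hs3 HPs3]].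
  destruct (Y_pos W P Y c1 cc k1 A s3 Hc1 HA Hcc HWp HYe HY) as [s4 Hs4].
  + intros s Hs. apply HPp; lra.
  + intros s Hs. assert (HB := small_bound k1 cc (P s) (HPp s ltac:(lra)) (HPs3 s Hs)).
    rewrite (Rabs_left cc) in HB by lra. pose proof (Rle_abs (k1 * P s)). lra.
  + exists s4. split; [intros; lra|]. intros _ s Hs. rewrite Dh. apply Hs4; auto.
Qed.
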